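(* For every $n\ge 2$, $f_{0,n}=(2n-4)!!$ and, for every $k=1,\dots,n-2$, $$f_{k,n}=\frac{(2n-k-5)!\,k}{(2n-2k-4)!!}\cdot{}_3F_2\!\left(\begin{array}{l}1,\ 2-n,\ k+2-n\\ \frac{k+5}{2}-n,\ \frac{k}{2}-n+3\end{array};1\right).$$
   Context: $\mathcal{T}_n$ is the set of fully resolved (binary) rooted trees with leaves bijectively labeled by $\{1,\dots,n\}$. For leaves $i\ne j$, $\varphi_T(i,j)$ is the depth (number of arcs from the root) of their lowest common ancestor. For $k\ge 0$, $f_{k,n}=|\{T\in\mathcal{T}_n:\varphi_T(1,2)=k\}|$. Double factorial: $(2m)!!=(2m)(2m-2)\cdots2$, $0!!=1$. The generalized hypergeometric function is ${}_pF_q\left(\begin{smallmatrix}a_1,\dots,a_p\\ b_1,\dots,b_q\end{smallmatrix};z\right)=\sum_{m\ge0}\frac{(a_1)_m\cdots(a_p)_m}{(b_1)_m\cdots(b_q)_m}\frac{z^m}{m!}$ with $(a)_0=1$, $(a)_m=a(a+1)\cdots(a+m-1)$; in the formula above the series terminates, being understood as the finite sum over $m=0,\dots,n-k-2$ (beyond which the factor $(k+2-n)_m$ vanishes; for these $m$ the denominators are nonzero). *)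

(* Defs.v *)
From Stdlib Require Import List Permutation.
From mathcomp Require Import all_boot all_order all_algebra.
Set Implicit Arguments. Unset Strict Implicit. Unset Printing Implicit Defensive.
Import Order.TTheory GRing.Theory Num.Theory.

Inductive tree : Type :=
| Leaf : nat -> tree
| Node : tree -> tree -> tree.

Fixpoint leaves (t : tree) : list nat :=
  match t with
  | Leaf l => [:: l]
  | Node a b => leaves a ++ leaves b
  end.

Definition min_leaf (t : tree) : nat :=
  match leaves t with
  | [::] => 0
  | x :: s => foldr minn x s
  end.

(* Canonical representative of an unordered (non-planar) tree: at every
   internal node, the child containing the smallest label comes first. *)
Fixpoint canonical (t : tree) : Prop :=
  match t with
  | Leaf _ => True
  | Node a b => canonical a /\ canonical b /\ (min_leaf a < min_leaf b)%N
  end.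

Definition in_Tn (n : nat) (t : tree) : Prop :=
  canonical t /\ Permutation (leaves t) (iota 1 n).

Fixpoint lca_depth (t : tree) (i j : nat) : nat :=
  match t with
  | Leaf _ => 0
  | Node a b =>
      if (i \in leaves a) && (j \in leaves a) then (lca_depth a i j).+1
      else if (i \in leaves b) && (j \in leaves b) then (lca_depth b i j).+1
      else 0
  end.

Definition has_card (P : tree -> Prop) (c : nat) : Prop :=
  exists s : list tree, NoDup s /\ (forall t, In t s <-> P t) /\ length s = c.

Definition f_is (k n c : nat) : Prop :=
  has_card (fun t => in_Tn n t /\ lca_depth t 1 2 = k) c.

Fixpoint dfact (m : nat) : nat :=
  match m with
  | 0 => 1
  | 1 => 1
  | (p.+2) as q => q * dfact p
  end.

Local Open Scope ring_scope.

Definition poch (a : rat) (m : nat) : rat := \prod_(i < m) (a + i%:R).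

(* terminating 3F2 at z = 1, summed over m = 0..N *)
Definition hyp3F2 (a1 a2 a3 b1 b2 : rat) (N : nat) : rat :=
  \sum_(m < N.+1)
     (poch a1 m * poch a2 m * poch a3 m) / (poch b1 m * poch b2 m) / (m`!)%:R.

(* Main.v *)
Require Import Defs.
From Stdlib Require Import List Permutation.
From HB Require Import structures.
From mathcomp Require Import all_boot all_order all_algebra.
From mathcomp Require Import zify ring.
Import Order.TTheory GRing.Theory Num.Theory.
Set Implicit Arguments. Unset Strict Implicit. Unset Printing Implicit Defensive.

Fixpoint tree_eqb (s t : tree) : bool :=
  match s, t with
  | Leaf a, Leaf b => a == b
  | Node a1 b1, Node a2 b2 => tree_eqb a1 a2 && tree_eqb b1 b2
  | _, _ => false
  end.

Lemma tree_eqP : Equality.axiom tree_eqb.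
Proof.
elim=> [a|a1 IH1 b1 IH2] [b|a2 b2] /=; try by constructor.
- by apply: (iffP eqP) => [->|[]].
- case: IH1 => [->|H]; last by constructor; case.
  case: IH2 => [->|H]; last by constructor; case.
  by constructor.
Qed.

HB.instance Definition _ := hasDecEq.Build tree tree_eqP.

Fixpoint ins (x : nat) (t : tree) : seq tree :=
  Node t (Leaf x) :: match t with
                     | Leaf _ => [::]
                     | Node a b => [seq Node s b | s <- ins x a] ++ [seq Node a s | s <- ins x b]
                     end.

Fixpoint gen (n : nat) : seq tree :=
  match n with
  | 0 => [::]
  | m.+1 => if m is 0 then [:: Leaf 1] else flatten [seq ins n t | t <- gen m]
  end.

Lemma leaves_ins x t s : s \in ins x t -> perm_eq (leaves s) (rcons (leaves t) x).
Proof.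
elim: t s => [l|a IHa b IHb] s; rewrite inE.
  by move=> /eqP -> /=.
case/orP => [/eqP -> /=|]; first by rewrite cats1.
rewrite mem_cat => /orP [/mapP [s' Hs' ->]|/mapP [s' Hs' ->]] /=.
  rewrite rcons_cat; apply: perm_trans (perm_cat (IHa _ Hs') (perm_refl _)) _.
  by rewrite -!cats1 -!catA perm_cat2l perm_catC.
by rewrite rcons_cat perm_cat2l IHb.
Qed.

Lemma mem_leaves_ins x t s i : s \in ins x t -> (i \in leaves s) = (i \in leaves t) || (i == x).
Proof. by move/leaves_ins/perm_mem => ->; rewrite mem_rcons inE orbC. Qed.

Lemma ins_node x t s : s \in ins x t -> exists a b, s = Node a b.
Proof.
case: t => [l|a b]; rewrite inE; first by move=> /eqP ->; eauto.
case/orP=> [/eqP ->|]; first by eauto.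
by rewrite mem_cat => /orP [/mapP [s' _ ->]|/mapP [s' _ ->]]; eauto.
Qed.

Lemma leaves_neq0 t : leaves t != [::].
Proof. by elim: t => //= a IHa b _; case: (leaves a) IHa. Qed.

Lemma foldr_min x s : foldr minn x s \in x :: s /\ forall y, y \in x :: s -> foldr minn x s <= y.
Proof.
elim: s => [|z s [IH1 IH2]] /=; first by split; [rewrite inE|move=> y; rewrite inE => /eqP ->].
split.
  rewrite /minn; case: ifP => _; first by rewrite !inE eqxx orbT.
  by move: IH1; rewrite !inE => /orP [->|->]; rewrite ?orbT.
move=> y; rewrite !inE => /or3P [/eqP ->| /eqP -> | Hy].
- by rewrite /= (leq_trans (geq_minr _ _)) // IH2 // inE eqxx.
- by rewrite /= geq_minl.
- by rewrite /= (leq_trans (geq_minr _ _)) // IH2 // inE Hy orbT.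
Qed.

Lemma min_leafP t : min_leaf t \in leaves t /\ forall y, y \in leaves t -> min_leaf t <= y.
Proof.
rewrite /min_leaf; have := leaves_neq0 t; case: (leaves t) => // x s _.
exact: foldr_min.
Qed.

Lemma min_leaf_eq t m : m \in leaves t -> (forall y, y \in leaves t -> m <= y) -> min_leaf t = m.
Proof.
move=> Hm Hy; case: (min_leafP t) => H1 H2.
by apply/eqP; rewrite eqn_leq H2 // Hy.
Qed.

Lemma min_ins s t x : perm_eq (leaves s) (rcons (leaves t) x) -> x \notin leaves t ->
  (forall y, y \in leaves s -> y <= x) -> min_leaf s = min_leaf t.
Proof.
move=> /perm_mem Hp Hx Hb.
have Hm : forall i, (i \in leaves s) = (i \in leaves t) || (i == x).
  by move=> i; rewrite Hp mem_rcons inE orbC.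
case: (min_leafP t) => Ht1 Ht2; case: (min_leafP s) => Hs1 Hs2.
have mx : min_leaf t != x by apply: contraNneq Hx => <-.
have Hlt : min_leaf t < x by rewrite ltn_neqAle mx Hb // Hm Ht1.
have Hst : min_leaf s <= min_leaf t by rewrite Hs2 // Hm Ht1.
have : min_leaf s \in leaves t.
  move: Hs1; rewrite Hm => /orP [//|/eqP Hx']; move: Hst; rewrite Hx' leqNgt Hlt //.
by move=> H; apply/eqP; rewrite eqn_leq Hst Ht2.
Qed.

Lemma canonical_ins x t s : canonical t -> (forall y, y \in leaves t -> y < x) ->
  s \in ins x t -> canonical s.
Proof.
elim: t s => [l|a IHa b IHb] s Hc Hb; rewrite inE.
  by move=> /eqP -> /=; split=> //; split=> //; rewrite /min_leaf /= Hb // inE.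
case/orP => [/eqP ->|]. 
  split=> //; split=> //; rewrite {2}/min_leaf /=.
  by case: (min_leafP (Node a b)) => H1 _; apply: Hb.
case: Hc => Ha [Hcb Hab].
rewrite mem_cat => /orP [/mapP [s' Hs' ->]|/mapP [s' Hs' ->]] /=.
- have Hb' : forall y, y \in leaves a -> y < x by move=> y Hy; apply: Hb; rewrite /= mem_cat Hy.
  split; first exact: IHa.
  split=> //; rewrite (min_ins (leaves_ins Hs')) //.
    by apply/negP => /Hb'; rewrite ltnn.
  by move=> y; rewrite (mem_leaves_ins _ Hs') => /orP [/Hb'/ltnW|/eqP ->].
- have Hb' : forall y, y \in leaves b -> y < x by move=> y Hy; apply: Hb; rewrite /= mem_cat Hy orbT.
  split=> //; split; first exact: IHb.
  rewrite (min_ins (leaves_ins Hs')) //.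
    by apply/negP => /Hb'; rewrite ltnn.
  by move=> y; rewrite (mem_leaves_ins _ Hs') => /orP [/Hb'/ltnW|/eqP ->].
Qed.

Lemma ins_head x t : Node t (Leaf x) \in ins x t.
Proof. by case: t => *; rewrite /= inE eqxx. Qed.

Lemma ins_exists x s : canonical s -> uniq (leaves s) -> x \in leaves s ->
  (forall y, y \in leaves s -> y <= x) -> s != Leaf x ->
  exists t, s \in ins x t /\ canonical t.
Proof.
elim: s => [l|a IHa b IHb] Hc Hu Hx Hb Hn.
  by move: Hx Hn; rewrite /= inE => /eqP ->; rewrite eqxx.
case: Hc => Ha [Hcb Hab].
move: Hu; rewrite /= cat_uniq => /and3P [Hua Hdis Hub].
have Hba : forall y, y \in leaves a -> y <= x by move=> y Hy; apply: Hb; rewrite /= mem_cat Hy.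
have Hbb : forall y, y \in leaves b -> y <= x by move=> y Hy; apply: Hb; rewrite /= mem_cat Hy orbT.
have [Ebx|Nbx] := eqVneq b (Leaf x).
  by exists a; split=> //; rewrite Ebx ins_head.
move: Hx; rewrite /= mem_cat => /orP [Hxa|Hxb].
- have Nax : a != Leaf x.
    apply/negP => /eqP Eax; move: Hab; rewrite Eax {1}/min_leaf /=.
    by case: (min_leafP b) => H1 _; rewrite ltnNge Hbb.
  have [ta [Hta Hcta]] := IHa Ha Hua Hxa Hba Nax.
  exists (Node ta b); split.
    by rewrite inE mem_cat; apply/orP; right; apply/orP; left; apply/mapP; exists a.
  split=> //; split=> //.
  have Hp := leaves_ins Hta.
  have Hxt : x \notin leaves ta.
    by move: Hua; rewrite (perm_uniq Hp) rcons_uniq => /andP [].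
  by rewrite -(min_ins Hp Hxt Hba).
- have [tb [Htb Hctb]] := IHb Hcb Hub Hxb Hbb Nbx.
  exists (Node a tb); split.
    by rewrite inE mem_cat; apply/orP; right; apply/orP; right; apply/mapP; exists b.
  split=> //; split=> //.
  have Hp := leaves_ins Htb.
  have Hxt : x \notin leaves tb.
    by move: Hub; rewrite (perm_uniq Hp) rcons_uniq => /andP [].
  by rewrite -(min_ins Hp Hxt Hbb).
Qed.

Lemma x_in_ins x t s : s \in ins x t -> x \in leaves s.
Proof. by move=> H; rewrite (mem_leaves_ins _ H) eqxx orbT. Qed.

Lemma uniq_ins x t : x \notin leaves t -> uniq (ins x t).
Proof.
elim: t => [l|a IHa b IHb] Hx //=.
move: Hx; rewrite mem_cat negb_or => /andP [Hxa Hxb].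
rewrite cat_uniq !map_inj_uniq ?IHa ?IHb //; last by move=> ? ? [].
  2: by move=> ? ? [].
rewrite andbT; apply/andP; split.
  rewrite mem_cat negb_or; apply/andP; split.
    apply/mapP => [[s' Hs' [E1 E2]]].
    by move: (x_in_ins Hs'); rewrite -E1 /= mem_cat (negPf Hxa) (negPf Hxb).
  apply/mapP => [[s' Hs' [E1 E2]]].
  by have [? [? E]] := ins_node Hs'; rewrite E in E2.
apply/hasPn => y /mapP [s' Hs' ->]; apply/mapP => [[s'' Hs'' [E1 E2]]].
by move: (x_in_ins Hs''); rewrite -E1 (negPf Hxa).
Qed.

Lemma ins_disj x t1 t2 s : x \notin leaves t1 -> x \notin leaves t2 ->
  s \in ins x t1 -> s \in ins x t2 -> t1 = t2.
Proof.
elim: t1 t2 s => [l|a IHa b IHb] t2 s Hx1 Hx2.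
- rewrite inE => /eqP ->; case: t2 Hx2 => [l2|a2 b2] Hx2; rewrite inE.
    by move=> /eqP [->].
  case/orP => [/eqP [] //|]; rewrite mem_cat => /orP [/mapP [s' Hs' [E1 E2]]|/mapP [s' Hs' [E1 E2]]].
    by move: Hx2; rewrite -E2 /= mem_cat inE eqxx orbT.
  by have [? [? E]] := ins_node Hs'; rewrite E in E2.
- move: (Hx1); rewrite /= mem_cat negb_or => /andP [Hxa Hxb].
  rewrite inE => /orP [/eqP ->|].
    case: t2 Hx2 => [l2|a2 b2] Hx2; rewrite inE.
      by move=> /eqP [].
    case/orP => [/eqP [-> ->] //|]; rewrite mem_cat => /orP [/mapP [s' Hs' [E1 E2]]|/mapP [s' Hs' [E1 E2]]].
      by move: Hx2; rewrite -E2 /= mem_cat inE eqxx orbT.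
    by have [? [? E]] := ins_node Hs'; rewrite E in E2.
  case: t2 Hx2 => [l2|a2 b2] Hx2; rewrite mem_cat => /orP [/mapP [s1 Hs1 ->]|/mapP [s1 Hs1 ->]]; rewrite inE.
  + by move=> /eqP [E1 E2]; move: Hx1; rewrite /= E2 mem_cat inE eqxx orbT.
  + by move=> /eqP [E1 E2]; have [? [? E]] := ins_node Hs1; rewrite E in E2.
  + move: (Hx2); rewrite /= mem_cat negb_or => /andP [Hxa2 Hxb2].
    case/orP => [/eqP [E1 E2]|].
      by move: (x_in_ins Hs1); rewrite E1 /= mem_cat (negPf Hxa2) (negPf Hxb2).
    rewrite mem_cat => /orP [/mapP [s' Hs' [E1 E2]]|/mapP [s' Hs' [E1 E2]]].
      by rewrite E2 (IHa a2 s1) // E1.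
    by move: (x_in_ins Hs1); rewrite E1 (negPf Hxa2).
  + move: (Hx2); rewrite /= mem_cat negb_or => /andP [Hxa2 Hxb2].
    case/orP => [/eqP [E1 E2]|].
      by have [? [? E]] := ins_node Hs1; rewrite E in E2.
    rewrite mem_cat => /orP [/mapP [s' Hs' [E1 E2]]|/mapP [s' Hs' [E1 E2]]].
      by move: (x_in_ins Hs'); rewrite -E1 (negPf Hxa).
    by rewrite E1 (IHb b2 s1) // E2.
Qed.

Lemma size_leaves_gt0 t : 0 < size (leaves t).
Proof. by rewrite lt0n size_eq0 leaves_neq0. Qed.

Lemma iota_rcons' m n : iota m n.+1 = rcons (iota m n) (m + n).
Proof. by have := iotaD m n 1; rewrite addn1 cats1. Qed.
Lemma iota_rcons n : iota 1 n.+1 = rcons (iota 1 n) n.+1.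
Proof. by rewrite iota_rcons' add1n. Qed.

Lemma gen_mem n t : 0 < n ->
  (t \in gen n) <-> (canonical t /\ perm_eq (leaves t) (iota 1 n)).
Proof.
elim: n t => [//|[|n] IH] t _.
  rewrite /= inE; split=> [/eqP -> //|[Hc Hp]].
  case: t Hc Hp => [l|a b] Hc Hp.
    by move: (perm_mem Hp l); rewrite /= !inE eqxx => /esym /eqP ->.
  move: (perm_size Hp); rewrite /= size_cat.
  by have := size_leaves_gt0 a; have := size_leaves_gt0 b; lia.
have Hn := IH^~ (isT : 0 < n.+1).
rewrite [gen _]/=; split.
  move=> /flatten_mapP [t0 Ht0 Hin]; case/Hn: Ht0 => Hc Hp.
  split.
    apply: (canonical_ins Hc) Hin => y; rewrite (perm_mem Hp) mem_iota; lia.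
  apply: perm_trans (leaves_ins Hin) _.
  by rewrite iota_rcons -!cats1 perm_cat2r.
move=> [Hc Hp].
have Hu : uniq (leaves t) by rewrite (perm_uniq Hp) iota_uniq.
have Hx : n.+2 \in leaves t by rewrite (perm_mem Hp) mem_iota; lia.
have Hb : forall y, y \in leaves t -> y <= n.+2 by move=> y; rewrite (perm_mem Hp) mem_iota; lia.
have Hnl : t != Leaf n.+2.
  apply/eqP => E; move: (perm_size Hp); rewrite E /= size_iota //.
have [t0 [Hin Hc0]] := ins_exists Hc Hu Hx Hb Hnl.
apply/flatten_mapP; exists t0 => //; apply/Hn; split=> //.
have Hp0 := leaves_ins Hin.
have : perm_eq (rcons (leaves t0) n.+2) (rcons (iota 1 n.+1) n.+2).
  rewrite -iota_rcons; apply: perm_trans Hp; by rewrite perm_sym.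
by rewrite perm_rcons perm_sym perm_rcons perm_cons perm_sym.
Qed.

Lemma uniq_flatten_map (T U : eqType) (f : T -> seq U) (s : seq T) :
  uniq s -> (forall t, t \in s -> uniq (f t)) ->
  (forall t1 t2 y, t1 \in s -> t2 \in s -> y \in f t1 -> y \in f t2 -> t1 = t2) ->
  uniq (flatten [seq f t | t <- s]).
Proof.
elim: s => [//|t s IH] /= /andP [Hts Hu] Hf Hd.
rewrite cat_uniq Hf ?inE ?eqxx //= IH //.
- rewrite andbT; apply/hasPn => y /flatten_mapP [t2 Ht2 Hy]; apply/negP => Hy'.
  have E := Hd t t2 y (mem_head _ _) ltac:(by rewrite inE Ht2 orbT) Hy' Hy.
  by move: Hts; rewrite E Ht2.
- by move=> t' Ht'; apply: Hf; rewrite inE Ht' orbT.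
- by move=> t1 t2 y H1 H2; apply: Hd; rewrite inE ?H1 ?H2 orbT.
Qed.

Lemma uniq_gen n : uniq (gen n).
Proof.
elim: n => [//|[//|n] IH].
rewrite [gen _]/=; apply: uniq_flatten_map => //.
  move=> t Ht; have [_ Hp] := (gen_mem t (isT : 0 < n.+1)).1 Ht; apply: uniq_ins.
  by rewrite (perm_mem Hp) mem_iota; lia.
move=> t1 t2 y Ht1 Ht2.
have [_ Hp1] := (gen_mem t1 (isT : 0 < n.+1)).1 Ht1.
have [_ Hp2] := (gen_mem t2 (isT : 0 < n.+1)).1 Ht2.
apply: ins_disj; by rewrite ?(perm_mem Hp1) ?(perm_mem Hp2) mem_iota; lia.
Qed.

Definition dd t := lca_depth t 1 2.
Definition PP t := (1 \in leaves t) && (2 \in leaves t).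

Lemma dd_node a b : dd (Node a b) = if PP a then (dd a).+1 else if PP b then (dd b).+1 else 0.
Proof. by []. Qed.

Lemma PP_ins x t s : x != 1 -> x != 2 -> s \in ins x t -> PP s = PP t.
Proof.
move=> H1 H2 Hs; rewrite /PP !(mem_leaves_ins _ Hs).
by rewrite ![_ == x]eq_sym (negPf H1) (negPf H2) !orbF.
Qed.

Lemma PP_leaf l : PP (Leaf l) = false.
Proof. by rewrite /PP /= !inE; case: eqP => // <-. Qed.

Lemma depth_bound t : PP t -> (dd t).+2 <= size (leaves t).
Proof.
elim: t => [l|a IHa b IHb]; first by rewrite PP_leaf.
rewrite dd_node /= size_cat => HP.
have := size_leaves_gt0 a; have := size_leaves_gt0 b.
case: (boolP (PP a)) => Ha; first by move: (IHa Ha); lia.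
case: (boolP (PP b)) => Hb; first by move: (IHb Hb); lia.
move: HP; rewrite /PP /= !mem_cat.
case: (boolP (1 \in leaves a)); case: (boolP (2 \in leaves a)); rewrite /= ?orbF => ? ? //; try lia.
Qed.

Lemma size_ins x t : (size (ins x t)).+1 = 2 * size (leaves t).
Proof.
elim: t => [//|a IHa b IHb] /=.
rewrite size_cat !size_map size_cat.
have := size_leaves_gt0 a; have := size_leaves_gt0 b; lia.
Qed.

Lemma map_const_in (T U : eqType) (f : T -> U) c s : (forall y, y \in s -> f y = c) ->
  map f s = nseq (size s) c.
Proof.
elim: s => [//|y s IH] H /=; rewrite H ?inE ?eqxx // IH // => z Hz.
by apply: H; rewrite inE Hz orbT.
Qed.

Lemma depth_ins x t : x != 1 -> x != 2 -> PP t ->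
  perm_eq (map dd (ins x t)) (nseq (dd t).+1 (dd t).+1 ++ nseq (2 * size (leaves t) - 2 - dd t) (dd t)).
Proof.
move=> H1 H2; elim: t => [l|a IHa b IHb]; first by rewrite PP_leaf.
move=> HP.
rewrite [ins _ _]/= map_cons map_cat.
have -> : dd (Node (Node a b) (Leaf x)) = (dd (Node a b)).+1.
  by rewrite dd_node HP.
have Hsa := size_ins x a; have Hsb := size_ins x b.
have := size_leaves_gt0 a; have := size_leaves_gt0 b.
rewrite [leaves (Node a b)]/= size_cat => Lb La.
case: (boolP (PP a)) => Ha.
  have Hda : dd (Node a b) = (dd a).+1 by rewrite dd_node Ha.
  have -> : map dd [seq Node s b | s <- ins x a] = map succn (map dd (ins x a)).
    rewrite -!map_comp; apply/eq_in_map => s' Hs' /=.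
    by rewrite dd_node (PP_ins H1 H2 Hs') Ha.
  have -> : map dd [seq Node a s | s <- ins x b] = nseq (size (ins x b)) (dd (Node a b)).
    rewrite -map_comp (@map_const_in _ _ _ (dd (Node a b))) //.
    by move=> s' _ /=; rewrite dd_node Ha Hda.
  rewrite Hda.
  have Hb := depth_bound Ha.
  apply: (@perm_trans _ ((dd a).+2 :: map succn (nseq (dd a).+1 (dd a).+1 ++ nseq (2 * size (leaves a) - 2 - dd a) (dd a)) ++ nseq (size (ins x b)) (dd a).+1)).
    by rewrite perm_cons perm_cat2r perm_map // IHa.
  rewrite map_cat !map_nseq /= -catA -nseqD.
  have -> : (2 * size (leaves a) - 2 - dd a + size (ins x b) = 2 * (size (leaves a) + size (leaves b)) - 2 - (dd a).+1)%N by lia.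
  by [].
case: (boolP (PP b)) => Hb.
  have Hdb : dd (Node a b) = (dd b).+1 by rewrite dd_node (negPf Ha) Hb.
  have -> : map dd [seq Node s b | s <- ins x a] = nseq (size (ins x a)) (dd (Node a b)).
    rewrite -map_comp (@map_const_in _ _ _ (dd (Node a b))) //.
    by move=> s' Hs' /=; rewrite dd_node (PP_ins H1 H2 Hs') (negPf Ha) Hb Hdb.
  have -> : map dd [seq Node a s | s <- ins x b] = map succn (map dd (ins x b)).
    rewrite -!map_comp; apply/eq_in_map => s' Hs' /=.
    by rewrite dd_node (PP_ins H1 H2 Hs') (negPf Ha) Hb.
  rewrite Hdb.
  have Hbd := depth_bound Hb.
  apply: (@perm_trans _ ((dd b).+2 :: nseq (size (ins x a)) (dd b).+1 ++ map succn (nseq (dd b).+1 (dd b).+1 ++ nseq (2 * size (leaves b) - 2 - dd b) (dd b)))).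
    by rewrite perm_cons perm_cat2l perm_map // IHb.
  rewrite map_cat !map_nseq /= perm_cons.
  rewrite -cat1s perm_catCA /= perm_cons perm_catCA perm_cat2l -nseqD.
  have -> : (size (ins x a) + (2 * size (leaves b) - 2 - dd b) = 2 * (size (leaves a) + size (leaves b)) - 2 - (dd b).+1)%N by lia.
  by [].
have Hd0 : dd (Node a b) = 0 by rewrite dd_node (negPf Ha) (negPf Hb).
have -> : map dd [seq Node s b | s <- ins x a] = nseq (size (ins x a)) 0.
  rewrite -map_comp (@map_const_in _ _ _ 0) //.
  by move=> s' Hs' /=; rewrite dd_node (PP_ins H1 H2 Hs') (negPf Ha) (negPf Hb).
have -> : map dd [seq Node a s | s <- ins x b] = nseq (size (ins x b)) 0.
  rewrite -map_comp (@map_const_in _ _ _ 0) //.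
  by move=> s' Hs' /=; rewrite dd_node (PP_ins H1 H2 Hs') (negPf Ha) (negPf Hb).
rewrite Hd0 -nseqD.
have -> : (size (ins x a) + size (ins x b) = 2 * (size (leaves a) + size (leaves b)) - 2 - 0)%N by lia.
by [].
Qed.

Lemma count_ins x t k : x != 1 -> x != 2 -> PP t ->
  count (fun s => dd s == k) (ins x t) =
  ((dd t).+1 == k) * (dd t).+1 + (dd t == k) * (2 * size (leaves t) - 2 - dd t).
Proof.
move=> H1 H2 HP.
have -> : count (fun s => dd s == k) (ins x t) = count (pred1 k) (map dd (ins x t)).
  by rewrite count_map.
by rewrite (permP (depth_ins H1 H2 HP)) count_cat !count_nseq.
Qed.

Lemma count_flat n x s k : x != 1 -> x != 2 ->
  (forall t, t \in s -> PP t /\ size (leaves t) = n) ->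
  count (fun s => dd s == k) (flatten [seq ins x t | t <- s]) =
  if k is j.+1 then j.+1 * count (fun t => dd t == j) s + (2 * n - 2 - j.+1) * count (fun t => dd t == j.+1) s
  else (2 * n - 2) * count (fun t => dd t == 0) s.
Proof.
move=> H1 H2; elim: s => [|t s IH] Hs; first by case: k => [|j] /=; rewrite ?muln0.
rewrite /= count_cat IH; last by move=> t' Ht'; apply: Hs; rewrite inE Ht' orbT.
have [HP Hsz] := Hs t (mem_head _ _).
rewrite count_ins // Hsz.
have Hb := depth_bound HP; rewrite Hsz in Hb.
clear IH; case: k => [|j].
  case: eqP => [E|_]; rewrite ?E /=; lia.
rewrite eqSS.
case: (eqVneq (dd t) j) => [E|N1].
  rewrite E (ltn_eqF (ltnSn j)) /= ?mul0n ?add0n ?mul1n; lia.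
case: (eqVneq (dd t) j.+1) => [E|N2]; rewrite /= ?mul0n ?add0n ?mul1n; try lia.
Qed.

Definition cnt k n := count (fun t => dd t == k) (gen n).

Lemma gen_prop n t : 2 <= n -> t \in gen n -> PP t /\ size (leaves t) = n.
Proof.
move=> Hn Ht; have [_ Hp] := (gen_mem t (ltnW Hn)).1 Ht.
split; last by rewrite (perm_size Hp) size_iota.
by rewrite /PP !(perm_mem Hp) !mem_iota; apply/andP; split; lia.
Qed.

Lemma cnt_rec n k : 2 <= n -> cnt k n.+1 =
  if k is j.+1 then j.+1 * cnt j n + (2 * n - 2 - j.+1) * cnt j.+1 n
  else (2 * n - 2) * cnt 0 n.
Proof.
case: n => [//|n] Hn.
rewrite /cnt [gen n.+2]/= (@count_flat n.+1) //; try (apply/eqP; lia).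
by move=> t Ht; exact: (gen_prop Hn Ht).
Qed.

Lemma cnt2 k : cnt k 2 = (k == 0).
Proof. by case: k. Qed.

Lemma dfactSS m : dfact m.+2 = m.+2 * dfact m.
Proof. by []. Qed.

Lemma cnt0 n : 2 <= n -> cnt 0 n = dfact (2 * n - 4).
Proof.
elim: n => [//|n IH] Hn.
case: (eqVneq n 1) => [->//|Nn].
have Hn' : 2 <= n by lia.
rewrite cnt_rec // IH //.
have -> : (2 * n.+1 - 4 = (2 * n - 4).+2)%N by lia.
by rewrite dfactSS; congr (_ * _); lia.
Qed.

Lemma In_mem (T : eqType) (x : T) s : In x s <-> x \in s.
Proof.
elim: s => [//|y s IH] /=; rewrite inE; split.
  by case=> [->|/IH ->]; rewrite ?eqxx ?orbT.
by case/orP => [/eqP ->|/IH]; [left|right].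
Qed.

Lemma NoDup_uniq (T : eqType) (s : seq T) : uniq s -> NoDup s.
Proof.
elim: s => [|x s IH] /=; first by constructor.
by case/andP => Hx Hu; constructor; [move/In_mem; apply/negP|apply: IH].
Qed.

Lemma perm_Perm (s t : seq nat) : perm_eq s t -> Permutation s t.
Proof.
elim: s t => [|x s IH] t Hp.
  by case: t Hp => // y t' /perm_size.
have Hx : x \in t by rewrite -(perm_mem Hp) mem_head.
move: Hp; case/splitPr: Hx => t1 t2 Hp.
apply: Permutation_cons_app; apply: IH.
have H2 : perm_eq (t1 ++ x :: t2) (x :: t1 ++ t2) by rewrite -[x :: t2]cat1s perm_catCA.
by rewrite -(perm_cons x) (perm_trans Hp H2).
Qed.

Lemma Perm_perm (s t : seq nat) : Permutation s t -> perm_eq s t.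
Proof.
elim=> [//|x l l' _ H|x y l|l l' l'' _ H1 _ H2].
- by rewrite perm_cons.
- by rewrite -[y :: x :: l]/([:: y] ++ [:: x] ++ l) perm_catCA.
- exact: perm_trans H1 H2.
Qed.

Lemma length_size T (s : seq T) : length s = size s.
Proof. by elim: s => //= ? ? ->. Qed.

Lemma f_is_cnt n k : 2 <= n -> f_is k n (cnt k n).
Proof.
move=> Hn; exists [seq t <- gen n | dd t == k]; split.
  by apply: NoDup_uniq; rewrite filter_uniq // uniq_gen.
split; last by rewrite length_size size_filter.
move=> t; rewrite In_mem mem_filter /in_Tn; split.
  case/andP => /eqP <- /(gen_mem t (ltnW Hn)) [Hc Hp]; split=> //; split=> //.
  exact: perm_Perm.
case=> [[Hc Hp] Hd]; have Hd' : dd t = k := Hd; rewrite Hd' eqxx /=.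
by apply/(gen_mem t (ltnW Hn)); split=> //; exact: Perm_perm.
Qed.

Local Open Scope ring_scope.

Definition cc (j k : nat) : rat := ((2 * j + k).-1`!)%:R / (((j + k)`!)%:R * (j`!)%:R).
Definition Upre (k r : nat) : rat := \sum_(j < r) cc j k / 4 ^+ j.

Ltac nz := repeat (apply/andP; split); rewrite ?natr1 ?nat1r -?natrD ?natr1 ?nat1r -?natrD ?natr1 ?nat1r -?natrD ?natr1 ?nat1r ?pnatr_eq0 -?lt0n ?fact_gt0 //.

Lemma fact_neq0 n : ((n`!)%:R : rat) != 0.
Proof. by rewrite pnatr_eq0 -lt0n fact_gt0. Qed.

Lemma Upre_S k r : Upre k r.+1 = Upre k r + cc r k / 4 ^+ r.
Proof. by rewrite /Upre big_ord_recr. Qed.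

Lemma Upre0 k : Upre k 0 = 0.
Proof. by rewrite /Upre big_ord0. Qed.

Lemma ccP k r : cc r.+1 k = cc r k.+1 * (2 * r + k).+1%:R / r.+1%:R.
Proof.
rewrite /cc.
have -> : ((2 * r.+1 + k).-1 = (2 * r + k).+1)%N by lia.
have -> : ((2 * r + k.+1).-1 = (2 * r + k))%N by lia.
have -> : (r.+1 + k = (r + k).+1)%N by lia.
have -> : (r + k.+1 = (r + k).+1)%N by lia.
rewrite !factS !natrM.
have H1 := fact_neq0 (2 * r + k); have H2 := fact_neq0 (r + k); have H3 := fact_neq0 r.
by field; nz.
Qed.

Lemma ccS k r : cc r.+1 k.+1 = cc r k.+1 * ((2 * r + k).+1%:R * (2 * r + k).+2%:R) / ((r + k).+2%:R * r.+1%:R).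
Proof.
rewrite /cc.
have -> : ((2 * r.+1 + k.+1).-1 = (2 * r + k).+2)%N by lia.
have -> : ((2 * r + k.+1).-1 = (2 * r + k))%N by lia.
have -> : (r.+1 + k.+1 = (r + k).+2)%N by lia.
have -> : (r + k.+1 = (r + k).+1)%N by lia.
rewrite !factS !natrM.
have H1 := fact_neq0 (2 * r + k); have H2 := fact_neq0 (r + k); have H3 := fact_neq0 r.
by field; nz.
Qed.

Lemma exp4_neq0 r : (4 : rat) ^+ r != 0.
Proof. by rewrite expf_neq0. Qed.

Lemma Main1 r : Upre 1 r + 2 * r.+1%:R * cc r 1 / 4 ^+ r = 2.
Proof.
elim: r => [|r IH].
  rewrite Upre0 /cc expr0 /= add0n (_ : 1`! = 1)%N // fact0; field.
have Hu : Upre 1 r = 2 - 2 * r.+1%:R * cc r 1 / 4 ^+ r by apply: (addIr (2 * r.+1%:R * cc r 1 / 4 ^+ r)); rewrite IH; ring.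
rewrite Upre_S Hu ccS exprS.
have H4 := exp4_neq0 r.
by field; nz.
Qed.

Lemma Main k r : k.+2%:R * Upre k.+2 r + 2 * (k.+2 + r)%:R * cc r k.+2 / 4 ^+ r =
  2 * k.+1%:R * Upre k.+1 r.+1.
Proof.
elim: r => [|r IH].
  rewrite Upre0 Upre_S Upre0 /cc !expr0 /= addn0 !add0n fact0.
  rewrite !factS !natrM.
  have H2 := fact_neq0 k.
  by field; nz.
have Hu : Upre k.+1 r.+1 = (k.+2%:R * Upre k.+2 r + 2 * (k.+2 + r)%:R * cc r k.+2 / 4 ^+ r) / (2 * k.+1%:R).
  by rewrite IH; field; nz.
rewrite Upre_S (Upre_S k.+1 r.+1) Hu ccS ccP exprS.
have H4 := exp4_neq0 r.
by field; nz.
Qed.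

Lemma dfact2 r : dfact (2 * r) = (2 ^ r * r`!)%N.
Proof.
elim: r => [//|r IH].
have -> : (2 * r.+1 = (2 * r).+2)%N by lia.
rewrite [dfact _]/= IH expnS factS; lia.
Qed.

Lemma LemA i r :
  ((i.+2 * (i.+2 + r)`! * 2 ^ r)%N%:R : rat) * Upre i.+2 r.+1 =
  i.+2%:R * ((i.+1 * (i.+1 + r)`! * 2 ^ r)%N%:R * Upre i.+1 r.+1) +
  (i.+2 + 2 * r)%N%:R * ((i.+2 * (i.+1 + r)`! * 2 ^ r.-1)%N%:R * Upre i.+2 r).
Proof.
have M := Main i r.
have Hu : Upre i.+1 r.+1 = (i.+2%:R * Upre i.+2 r + 2 * (i.+2 + r)%:R * cc r i.+2 / 4 ^+ r) / (2 * i.+1%:R).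
  by rewrite M; field; nz.
rewrite Hu Upre_S.
have -> : ((i.+2 + r)`! = (i.+2 + r) * (i.+1 + r)`!)%N by rewrite addSn factS.
have H4 := exp4_neq0 r; have Hf := fact_neq0 (i.+1 + r).
case: r {M Hu} H4 Hf => [|s] H4 Hf.
  rewrite Upre0 /= !natrM !natrX.
  by field; nz.
rewrite expnS /= !natrM !natrX.
by field; nz.
Qed.

Lemma Lem1 r :
  (((1 + r)`! * 2 ^ r)%N%:R : rat) * Upre 1 r.+1 =
  (dfact (2 * r))%:R + (1 + 2 * r)%N%:R * ((r`! * 2 ^ r.-1)%N%:R * Upre 1 r).
Proof.
have M := Main1 r.
have Hu : Upre 1 r = 2 - 2 * r.+1%:R * cc r 1 / 4 ^+ r.
  by apply: (addIr (2 * r.+1%:R * cc r 1 / 4 ^+ r)); rewrite M; ring.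
rewrite Upre_S Hu dfact2.
have -> : ((1 + r)`! = r.+1 * r`!)%N by rewrite add1n factS.
have H4 := exp4_neq0 r; have Hf := fact_neq0 r.
case: r {M Hu} H4 Hf => [|s] H4 Hf.
  rewrite /= !natrM ?natrX /cc /=.
  rewrite (_ : 1`! = 1)%N // fact0.
rewrite expnS /= !natrM !natrX.
by field; nz.
Qed.

Definition G (k n : nat) : rat := ((k * (n - 2)`! * 2 ^ (n - k - 2))%N)%:R * Upre k (n - k - 1).

Lemma G_eq k n a b c : (n - 2 = a)%N -> (n - k - 2 = b)%N -> (n - k - 1 = c)%N ->
  G k n = ((k * a`! * 2 ^ b)%N)%:R * Upre k c.
Proof. by move=> <- <- <-. Qed.

Lemma G_rec j n : (2 <= n)%N -> G j.+1 n.+1 =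
  j.+1%:R * (if j is i.+1 then G j n else (dfact (2 * n - 4))%:R) + (2 * n - 2 - j.+1)%N%:R * G j.+1 n.
Proof.
move=> Hn.
case: (leqP j.+1 (n - 1)) => H; last first.
  rewrite (@G_eq j.+1 n.+1 (n.+1 - 2) (n.+1 - j.+1 - 2) 0) //; last by lia.
  rewrite (@G_eq j.+1 n (n - 2) (n - j.+1 - 2) 0) //; last by lia.
  case: j H => [|i] H; first by lia.
  rewrite (@G_eq i.+1 n (n - 2) (n - i.+1 - 2) 0) //; last by lia.
  by rewrite !Upre0 !mulr0 addr0.
have [r Er] : exists r, n = (j + 2 + r)%N by exists (n - j - 2)%N; lia.
case: j H Hn Er => [|i] H Hn Er.
  rewrite (@G_eq 1 n.+1 (1 + r) r r.+1); try lia.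
  rewrite (@G_eq 1 n r r.-1 r); try lia.
  have -> : (2 * n - 4 = 2 * r)%N by lia.
  have -> : (2 * n - 2 - 1 = 1 + 2 * r)%N by lia.
  by rewrite !mul1n mul1r Lem1.
rewrite (@G_eq i.+2 n.+1 (i.+2 + r) r r.+1); try lia.
rewrite (@G_eq i.+1 n (i.+1 + r) r r.+1); try lia.
rewrite (@G_eq i.+2 n (i.+1 + r) r.-1 r); try lia.
have -> : (2 * n - 2 - i.+2 = i.+2 + 2 * r)%N by lia.
exact: LemA.
Qed.

Lemma cnt_G n k : (2 <= n)%N -> (cnt k.+1 n)%:R = G k.+1 n.
Proof.
elim: n k => [//|n IH] k Hn.
case: (eqVneq n 1) => [->|Nn].
  rewrite cnt2 /G /=.
  have -> : (2 - k.+1 - 1 = 0)%N by lia.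
  by rewrite Upre0 mulr0.
have Hn' : (2 <= n)%N by lia.
rewrite cnt_rec // natrD !natrM G_rec // IH //.
case: k => [|i]; first by rewrite cnt0.
by rewrite IH.
Qed.

Lemma poch_S a m : poch a m.+1 = poch a m * (a + m%:R).
Proof. by rewrite /poch big_ord_recr. Qed.

Lemma poch0 a : poch a 0 = 1.
Proof. by rewrite /poch big_ord0. Qed.

Lemma poch1 m : poch 1 m = (m`!)%:R.
Proof.
elim: m => [|m IH]; first by rewrite poch0.
by rewrite poch_S IH factS natrM nat1r mulrC.
Qed.

Lemma poch_neg m t : poch (- (m + t)%:R) m = (-1) ^+ m * ((m + t)`!)%:R / (t`!)%:R.
Proof.
elim: m t => [|m IH] t.
  rewrite poch0 add0n expr0 mul1r divff //; exact: fact_neq0.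
rewrite poch_S.
have -> : (m.+1 + t = m + t.+1)%N by lia.
rewrite IH exprS factS natrM.
have Hf := fact_neq0 t.
rewrite !natrD -natr1.
by field; nz.
Qed.

Lemma poch_half m t :
  poch (- (2 * m + t)%:R / 2) m * poch (- (2 * m + t)%:R / 2 + 1 / 2) m =
  ((2 * m + t)`!)%:R / ((t`!)%:R * 4 ^+ m).
Proof.
elim: m t => [|m IH] t.
  have -> : (2 * 0 + t = t)%N by lia.
  rewrite !poch0 expr0 !mulr1 divff //; exact: fact_neq0.
rewrite !poch_S.
have -> : (2 * m.+1 + t = 2 * m + t.+2)%N by lia.
rewrite mulrACA IH exprS !factS !natrM.
have Hf := fact_neq0 t; have H4 := exp4_neq0 m.

by field; nz.
Qed.

Lemma exp4 t : (4 : rat) ^+ t = 2 ^+ t * 2 ^+ t.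
Proof. by rewrite -exprMn; congr (_ ^+ _); rewrite -natrM. Qed.

Lemma exp2_neq0 t : (2 : rat) ^+ t != 0.
Proof. by rewrite expf_neq0. Qed.

Lemma Final k r :
 (((k.+1 * (k.+1 + r)`! * 2 ^ r)%N)%:R : rat) * Upre k.+1 r.+1 =
 ((k + 2 * r)`!)%:R * k.+1%:R / (dfact (2 * r))%:R *
 hyp3F2 1 (- (k.+1 + r)%:R) (- r%:R) (- (k + 2 * r)%:R / 2) (- (k + 2 * r)%:R / 2 + 1 / 2) r.
Proof.
rewrite /Upre /hyp3F2 !mulr_sumr (reindex_inj rev_ord_inj) /=.
apply: eq_bigr => [[m Hm]] _ /=.
have [t Et] : exists t, r = (m + t)%N by exists (r - m)%N; lia.
subst r.
have -> : ((m + t).+1 - m.+1 = t)%N by lia.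
have -> : (k.+1 + (m + t) = m + (k.+1 + t))%N by lia.
have -> : (k + 2 * (m + t) = 2 * m + (k + 2 * t))%N by lia.
rewrite poch_half !poch_neg poch1 dfact2 /cc.
have -> : ((2 * t + k.+1).-1 = k + 2 * t)%N by lia.
have -> : (t + k.+1 = k.+1 + t)%N by lia.
rewrite !natrM !natrX exp4 (exp4 m) exprD -signr_odd.
have H1 := exp2_neq0 m; have H2 := exp2_neq0 t.
have F1 := fact_neq0 (k + 2 * t); have F2 := fact_neq0 (k.+1 + t); have F3 := fact_neq0 t.
have F4 := fact_neq0 (m + t); have F5 := fact_neq0 m; have F6 := fact_neq0 (2 * m + (k + 2 * t)).
case: (odd m); rewrite ?expr0 ?expr1; by field; nz.
Qed.

Unset Implicit Arguments.

Theorem lemma9 (n : nat) : (2 <= n)%N ->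
  f_is 0 n (dfact (2 * n - 4)) /\
  (forall k : nat, (1 <= k <= n - 2)%N ->
     exists c : nat, f_is k n c /\
       (c%:R : rat) =
         ((2 * n - k - 5)`!)%:R * k%:R / (dfact (2 * n - 2 * k - 4))%:R *
         hyp3F2 1 (2%:R - n%:R) (k%:R + 2%:R - n%:R)
                ((k%:R + 5%:R) / 2%:R - n%:R) (k%:R / 2%:R - n%:R + 3%:R)
                (n - k - 2)).
Proof.
move=> Hn; split.
  rewrite -cnt0 //; exact: f_is_cnt.
move=> k /andP [Hk1 Hk2].
exists (cnt k n); split; first exact: f_is_cnt.
case: k Hk1 Hk2 => [//|k] _ Hk.
rewrite cnt_G //.
have [r Er] : exists r, n = (k + r + 3)%N by exists (n - k - 3)%N; lia.
rewrite (@G_eq k.+1 n (k.+1 + r) r r.+1); try lia.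
rewrite Final.
have -> : (2 * n - k.+1 - 5 = k + 2 * r)%N by lia.
have -> : (2 * n - 2 * k.+1 - 4 = 2 * r)%N by lia.
have -> : (n - k.+1 - 2 = r)%N by lia.
subst n.
congr (_ * hyp3F2 _ _ _ _ _ _).
- rewrite !natrD; ring.
- rewrite !natrD; ring.
- by rewrite ?natrD ?natrM; field.
- by rewrite ?natrD ?natrM; field.
Qed.
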